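(* Let $N\geq 2$ and $k\geq 1$ be integers and let $|\psi_1\rangle,\dots,|\psi_N\rangle$ be linearly independent pure states, each with prior probability $1/N$. For each function $\sigma:\{1,\dots,k\}\to\{1,\dots,N\}$ let $|\psi_\sigma\rangle=|\psi_{\sigma(1)}\rangle\otimes\cdots\otimes|\psi_{\sigma(k)}\rangle$, with prior probability $1/N^k$. Let $p$ be the optimum probability of unambiguous discrimination among the states $|\psi_1\rangle,\dots,|\psi_N\rangle$, and $p_{N,k}$ the optimum probability of unambiguous discrimination among the $N^k$ states $|\psi_\sigma\rangle$. Then $p_{N,k}\geq p^k$.
   Context: Unambiguous discrimination of states $|\chi_1\rangle,\dots,|\chi_M\rangle$ with prior probabilities $\eta_1,\dots,\eta_M$: a POVM $\{E_1,\dots,E_M,E_?\}$ such that $\langle\chi_j|E_i|\chi_j\rangle=0$ for all $i\neq j$, with $E_?$ the inconclusive outcome. Its success probability is $\sum_i\eta_i\langle\chi_i|E_i|\chi_i\rangle$, and the optimum probability of unambiguous discrimination is the supremum of this over all such POVMs. *)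

(* Defs.v *)
From HB Require Import structures.
From mathcomp Require Import all_boot all_order all_algebra.
From mathcomp Require Import complex.
From mathcomp Require Import classical_sets reals.
Set Implicit Arguments. Unset Strict Implicit. Unset Printing Implicit Defensive.
Import Order.TTheory GRing.Theory Num.Theory.
Local Open Scope ring_scope.
Local Open Scope complex_scope.

Section QDefs.
Variable R : realType.
Notation C := R[i].

(* A finite-dimensional Hilbert space C^I has orthonormal basis indexed by a
   finite type I; vectors are maps I -> C, operators are "matrices" I -> I -> C. *)
Definition vec (I : finType) := I -> C.
Definition op (I : finType) := I -> I -> C.

Definition braket (I : finType) (u : vec I) (A : op I) (v : vec I) : C :=
  \sum_(x : I) \sum_(y : I) (u x)^* * A x y * v y.

Definition psd (I : finType) (A : op I) : Prop :=
  forall v : vec I, 0 <= braket v A v.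

Definition normalized (I : finType) (v : vec I) : Prop :=
  \sum_(x : I) `|v x| ^+ 2 = 1.

Definition lin_indep (J I : finType) (chi : J -> vec I) : Prop :=
  forall c : J -> C, (forall x : I, \sum_(j : J) c j * chi j x = 0) ->
    forall j, c j = 0.

Definition povm (J I : finType) (E : J -> op I) (Einc : op I) : Prop :=
  (forall j, psd (E j)) /\ psd Einc /\
  (forall x y : I, \sum_(j : J) E j x y + Einc x y = (x == y)%:R).

Definition unambiguous (J I : finType) (chi : J -> vec I) (E : J -> op I) : Prop :=
  forall i j : J, i != j -> braket (chi j) (E i) (chi j) = 0.

(* success probability  sum_i eta_i <chi_i|E_i|chi_i>  (a real number, since
   the E_i are psd; we take its real part to land in R) *)
Definition success (J I : finType) (chi : J -> vec I) (eta : J -> R)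
  (E : J -> op I) : R :=
  complex.Re (\sum_(j : J) (eta j)%:C * braket (chi j) (E j) (chi j)).

Definition opt_ud (J I : finType) (chi : J -> vec I) (eta : J -> R) : R :=
  sup [set s : R | exists (E : J -> op I) (Einc : op I),
        [/\ povm E Einc, unambiguous chi E & s = success chi eta E]].

(* k-fold tensor product state: basis of (C^I)^{(x)k} indexed by {ffun 'I_k -> I} *)
Definition tensor_state (N k : nat) (I : finType) (psi : 'I_N -> vec I)
  (sigma : {ffun 'I_k -> 'I_N}) : vec {ffun 'I_k -> I} :=
  fun x => \prod_(m < k) psi (sigma m) (x m).

End QDefs.

(* Main.v *)
Require Import Defs.
From HB Require Import structures.
From mathcomp Require Import all_boot all_order all_algebra.
From mathcomp Require Import complex.
From mathcomp Require Import classical_sets reals.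
From mathcomp Require Import ring lra.
Import Order.TTheory GRing.Theory Num.Theory.
Local Open Scope ring_scope.
Local Open Scope complex_scope.
Section S.
Variable R : realType.
Notation C := R[i].
Implicit Types (I J : finType).

Lemma bk_ext I (u v : vec R I) (A B : op R I) : (forall x y, A x y = B x y) ->
  braket u A v = braket u B v.
Proof. by move=> h; rewrite /braket; apply: eq_bigr => x _; apply: eq_bigr => y _; rewrite h. Qed.

Lemma bk_opD I (u v : vec R I) (A B : op R I) :
  braket u (fun x y => A x y + B x y) v = braket u A v + braket u B v.
Proof.
rewrite /braket -big_split; apply: eq_bigr => x _; rewrite -big_split.
by apply: eq_bigr => y _ /=; ring.
Qed.

Lemma bk_opN I (u v : vec R I) (A : op R I) :
  braket u (fun x y => - A x y) v = - braket u A v.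
Proof.
rewrite /braket -sumrN; apply: eq_bigr => x _; rewrite -sumrN.
by apply: eq_bigr => y _ /=; ring.
Qed.

Lemma bk_opS J I (u v : vec R I) (A : J -> op R I) :
  braket u (fun x y => \sum_j A j x y) v = \sum_j braket u (A j) v.
Proof.
rewrite /braket [RHS]exchange_big; apply: eq_bigr => x _ /=.
rewrite [RHS]exchange_big; apply: eq_bigr => y _ /=.
by rewrite mulr_sumr mulr_suml.
Qed.

Lemma bk_vDl I (u1 u2 v : vec R I) (A : op R I) :
  braket (fun x => u1 x + u2 x) A v = braket u1 A v + braket u2 A v.
Proof.
rewrite /braket -big_split; apply: eq_bigr => x _; rewrite -big_split.
by apply: eq_bigr => y _ /=; rewrite rmorphD; ring.
Qed.

Lemma bk_vZl I (a : C) (u v : vec R I) (A : op R I) :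
  braket (fun x => a * u x) A v = conjc a * braket u A v.
Proof.
rewrite /braket mulr_sumr; apply: eq_bigr => x _; rewrite mulr_sumr.
by apply: eq_bigr => y _ /=; rewrite rmorphM; ring.
Qed.

Lemma bk_vDr I (u v1 v2 : vec R I) (A : op R I) :
  braket u A (fun x => v1 x + v2 x) = braket u A v1 + braket u A v2.
Proof.
rewrite /braket -big_split; apply: eq_bigr => x _; rewrite -big_split.
by apply: eq_bigr => y _ /=; ring.
Qed.

Lemma bk_vZr I (a : C) (u v : vec R I) (A : op R I) :
  braket u A (fun x => a * v x) = a * braket u A v.
Proof.
rewrite /braket mulr_sumr; apply: eq_bigr => x _; rewrite mulr_sumr.
by apply: eq_bigr => y _ /=; ring.
Qed.

Lemma ge0_conj (z : C) : 0 <= z -> conjc z = z.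
Proof. by case: z => a b; rewrite lecE /= => /andP[/eqP -> _]; rewrite oppr0. Qed.

Notation ii := (Complex (0:R) 1).
Lemma ci : conjc ii = - ii. Proof. by apply/eqP; rewrite eq_complex /= oppr0 !eqxx. Qed.

Lemma cD (x y : C) : conjc (x + y) = conjc x + conjc y. Proof. exact: rmorphD. Qed.
Lemma cM (x y : C) : conjc (x * y) = conjc x * conjc y. Proof. exact: rmorphM. Qed.
Lemma cN (x : C) : conjc (- x) = - conjc x. Proof. exact: rmorphN. Qed.
Lemma cS (J : finType) (F : J -> C) : conjc (\sum_j F j) = \sum_j conjc (F j).
Proof. exact: rmorph_sum. Qed.
Lemma cP (J : finType) (F : J -> C) : conjc (\prod_j F j) = \prod_j conjc (F j).
Proof. exact: rmorph_prod. Qed.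
Lemma cK (x : C) : conjc (conjc x) = x. Proof. exact: conjcK. Qed.

Lemma bk_herm I (A : op R I) (u w : vec R I) : psd A ->
  braket u A w = conjc (braket w A u).
Proof.
move=> hA.
have h1 := @ge0_conj _ (hA (fun x => u x + w x)).
have h2 := @ge0_conj _ (hA (fun x => u x + ii * w x)).
rewrite !bk_vDl !bk_vDr !bk_vZl !bk_vZr in h1 h2.
have hu := @ge0_conj _ (hA u); have hw := @ge0_conj _ (hA w).
move: h1 h2; rewrite ?cD ?cM ?ci ?cN ?cK ?ci ?opprK hu hw.
set c := braket u A w; set d := braket w A u; set U := braket u A u; set W := braket w A w => h1 h2.
have e1 : conjc c + conjc d - c - d = 0.
  by apply/eqP; rewrite -(subrr (U + c + (d + W))) -{1}h1; apply/eqP; ring.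
have e2 : ii * (- conjc c + conjc d - c + d) = 0.
  by apply/eqP; rewrite -(subrr (U + ii * c + (- ii * d + - ii * (ii * W)))) -{1}h2; apply/eqP; ring.
move/eqP: e2; rewrite mulf_eq0 => /orP[/eqP|/eqP e2]; first by move/(congr1 (@complex.Im R)) => /= /eqP; rewrite oner_eq0.
have : 2%:R * (c - conjc d) = - ((conjc c + conjc d - c - d) + (- conjc c + conjc d - c + d)) by ring.
rewrite e1 e2 addr0 oppr0 => /eqP; rewrite mulf_eq0 pnatr_eq0 /= subr_eq0.
by move/eqP.
Qed.


Lemma bk_cs I (A : op R I) (u w : vec R I) : psd A -> 0 < braket w A w ->
  braket w A u * conjc (braket w A u) <= braket w A w * braket u A u.
Proof.
move=> hA hB.
set B := braket w A w; set d := braket w A u; set U := braket u A u.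
have hc : braket u A w = conjc d by exact: bk_herm.
have hBc : conjc B = B by apply: ge0_conj; exact: ltW.
have := hA (fun x => B * u x + (- d) * w x).
rewrite !bk_vDl !bk_vDr !bk_vZl !bk_vZr hc -/B -/d -/U hBc cN.
have -> : B * (B * U) + B * (- d * conjc d) + (- conjc d * (B * d) + - conjc d * (- d * B))
  = B * (B * U - d * conjc d) by ring.
by rewrite pmulr_rge0 // subr_ge0.
Qed.

Definition nsq (z : C) := conjc z * z.
Lemma nsq_ge0 z : 0 <= nsq z.
Proof. by rewrite /nsq mulrC; exact: mulcJ_ge0. Qed.
Lemma nsqM x y : nsq (x * y) = nsq x * nsq y.
Proof. by rewrite /nsq cM; ring. Qed.

Lemma bk_id I (v : vec R I) :
  braket v (fun x y => (x == y)%:R) v = \sum_x nsq (v x).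
Proof.
rewrite /braket; apply: eq_bigr => x _; rewrite (bigD1 x) //= eqxx mulr1 big1 ?addr0 //.
by move=> y; rewrite eq_sym => /negbTE ->; rewrite mulr0 mul0r.
Qed.

Lemma povm_le J I (E : J -> op R I) Einc (v : vec R I) : povm E Einc ->
  \sum_j braket v (E j) v <= \sum_x nsq (v x).
Proof.
case=> _ [hinc heq].
rewrite -bk_id (@bk_ext _ v v _ _ (fun x y => esym (heq x y))) bk_opD bk_opS.
by rewrite lerDl; apply: hinc.
Qed.

Lemma rank1 I (h v : vec R I) :
  braket v (fun x y => conjc (h x) * h y) v = nsq (\sum_y h y * v y).
Proof.
rewrite /nsq /braket cS mulr_suml; apply: eq_bigr => x _.
rewrite mulr_sumr; apply: eq_bigr => y _; rewrite cM; ring.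
Qed.

Definition fcons {T : finType} {k} (a : T) (y : {ffun 'I_k -> T}) : {ffun 'I_k.+1 -> T} :=
  [ffun i => if unlift ord0 i is Some m then y m else a].
Definition ftail {T : finType} {k} (x : {ffun 'I_k.+1 -> T}) : {ffun 'I_k -> T} :=
  [ffun m => x (lift ord0 m)].
Lemma fcons0 (T : finType) k (a : T) (y : {ffun 'I_k -> T}) : fcons a y ord0 = a.
Proof. by rewrite ffunE unlift_none. Qed.
Lemma fconsS (T : finType) k (a : T) (y : {ffun 'I_k -> T}) m : fcons a y (lift ord0 m) = y m.
Proof. by rewrite ffunE liftK. Qed.
Lemma fconsK (T : finType) k (x : {ffun 'I_k.+1 -> T}) : fcons (x ord0) (ftail x) = x.
Proof. by apply/ffunP => i; rewrite ffunE; case: unliftP => [j ->|->]; rewrite ?ffunE. Qed.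

Lemma sum_fcons (T : finType) k (F : {ffun 'I_k.+1 -> T} -> C) :
  \sum_x F x = \sum_a \sum_y F (fcons a y).
Proof.
rewrite pair_big /= (reindex (fun p : T * {ffun 'I_k -> T} => fcons p.1 p.2)) //.
exists (fun x : {ffun 'I_k.+1 -> T} => (x ord0, ftail x)) => [[a y] _ | x _] /=; last exact: fconsK.
by rewrite fcons0; congr pair; apply/ffunP => m; rewrite ffunE fconsS.
Qed.

Lemma sum_ffun0 (T : finType) (F : {ffun 'I_0 -> T} -> C) :
  \sum_x F x = F (ffun0 (card_ord 0)).
Proof.
rewrite (big_pred1 (ffun0 (card_ord 0))) // => x /=.
by apply/esym/eqP/ffunP => -[].
Qed.

Lemma FB J I (h : J -> vec R I) :
  (forall v : vec R I, \sum_j nsq (\sum_x h j x * v x) <= \sum_x nsq (v x)) ->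
  forall k (v : vec R {ffun 'I_k -> I}),
  \sum_(s : {ffun 'I_k -> J}) nsq (\sum_(x : {ffun 'I_k -> I}) (\prod_(m < k) h (s m) (x m)) * v x)
    <= \sum_x nsq (v x).
Proof.
move=> hf; elim=> [|k IH] v.
  rewrite sum_ffun0 (@sum_ffun0 I (fun x => nsq (v x))) (@sum_ffun0 I (fun x => _ * v x)).
  by rewrite big_ord0 mul1r.
pose w j y := \sum_a h j a * v (fcons a y).
have key : forall j (t : {ffun 'I_k -> J}),
  \sum_(x : {ffun 'I_k.+1 -> I}) (\prod_(m < k.+1) h (fcons j t m) (x m)) * v x
  = \sum_(y : {ffun 'I_k -> I}) (\prod_(m < k) h (t m) (y m)) * w j y.
  move=> j t; rewrite sum_fcons exchange_big; apply: eq_bigr => y _.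
  rewrite /w mulr_sumr; apply: eq_bigr => a _; rewrite big_ord_recl !fcons0.
  under eq_bigr do rewrite !fconsS.
  ring.
rewrite sum_fcons.
under eq_bigr do under eq_bigr do rewrite key.
apply: (le_trans (ler_sum _ (fun j _ => IH (w j)))).
rewrite exchange_big [leRHS]sum_fcons [leRHS]exchange_big.
by apply: ler_sum => y _; apply: hf.
Qed.

Lemma nsqP (J : finType) (F : J -> C) : nsq (\prod_j F j) = \prod_j nsq (F j).
Proof. by rewrite /nsq cP -big_split. Qed.

Lemma nsq0 : nsq 0 = 0. Proof. by rewrite /nsq mulr0. Qed.

Lemma nsq_eq0 z : nsq z = 0 -> z = 0.
Proof.
move/eqP; rewrite /nsq mulf_eq0 => /orP[/eqP h|/eqP //].
by rewrite -[z]cK h; exact: conjc0.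
Qed.

Lemma hnsq (a b : C) : 0 <= a -> nsq ((sqrtc a)^-1 * b) = a^-1 * nsq b.
Proof.
move=> ha; rewrite nsqM; congr (_ * _).
have hc : 0 <= (sqrtc a)^-1 by rewrite invr_ge0 sqrtc_ge0.
by rewrite /nsq (ge0_conj _ hc) -expr2 exprVn sqr_sqrtc.
Qed.

Lemma ReX (z : C) n : 0 <= z -> complex.Re (z ^+ n) = (complex.Re z) ^+ n.
Proof.
case: z => a b; rewrite lecE /= => /andP[/eqP hb _]; rewrite hb.
have e : forall n, (a +i* 0) ^+ n = (a ^+ n) +i* 0.
  elim=> [|m IH] //; rewrite exprS IH; apply/eqP.
  by rewrite eq_complex /= !mulr0 !mul0r subr0 addr0 exprS !eqxx.
by rewrite e.
Qed.

Lemma prod_const_ord k (x : C) : \prod_(m < k) x = x ^+ k.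
Proof. by rewrite big_const_ord; elim: k => //= k ->; rewrite exprS. Qed.

Lemma construct I N k (psi : 'I_N -> vec R I) (E : 'I_N -> op R I) Einc :
  povm E Einc -> unambiguous psi E ->
  exists (F : {ffun 'I_k -> 'I_N} -> op R {ffun 'I_k -> I}) Finc,
    [/\ povm F Finc, unambiguous (tensor_state psi) F &
    success (tensor_state psi) (fun _ : {ffun 'I_k -> 'I_N} => (N%:R ^+ k)^-1) F
      = (success psi (fun _ => N%:R^-1) E) ^+ k].
Proof.
move=> hpovm hun.
have [hE [hinc heq]] := hpovm.
pose a j := braket (psi j) (E j) (psi j).
have ha : forall j, 0 <= a j by move=> j; exact: hE.
pose h j x := (sqrtc (a j))^-1 * \sum_y conjc (psi j y) * E j y x.
have hv : forall j (v : vec R I),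
    \sum_x h j x * v x = (sqrtc (a j))^-1 * braket (psi j) (E j) v.
  move=> j v; rewrite /braket [in RHS]exchange_big mulr_sumr.
  by apply: eq_bigr => x _; rewrite -mulrA mulr_suml.
have KP : forall j v, nsq (\sum_x h j x * v x) <= braket v (E j) v.
  move=> j v; rewrite hv hnsq //.
  case: (eqVneq (a j) 0) => [->|anz]; first by rewrite invr0 mul0r; exact: hE.
  have apos : 0 < a j by rewrite lt_def anz ha.
  rewrite -(ler_pM2l apos) mulrA mulfV // mul1r /nsq mulrC.
  exact: bk_cs.
have UN : forall i j, i != j -> \sum_x h j x * psi i x = 0.
  move=> i j hij; rewrite hv.
  case: (eqVneq (a j) 0) => [->|anz]; first by rewrite sqrtc0 invr0 mul0r.
  have apos : 0 < a j by rewrite lt_def anz ha.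
  suff -> : braket (psi j) (E j) (psi i) = 0 by rewrite mulr0.
  apply: nsq_eq0; apply/eqP; rewrite eq_le nsq_ge0 andbT.
  have := @bk_cs _ _ (psi i) (psi j) (hE j) apos; rewrite (hun j i) ?mulr0 1?eq_sym //.
  by rewrite /nsq mulrC.
have SU : forall j, nsq (\sum_x h j x * psi j x) = a j.
  move=> j; rewrite hv hnsq // -/(a j).
  case: (eqVneq (a j) 0) => [->|anz]; first by rewrite invr0 mul0r.
  by rewrite /nsq (ge0_conj _ (ha j)) mulrA mulVf // mul1r.
pose H (s : {ffun 'I_k -> 'I_N}) (x : {ffun 'I_k -> I}) := \prod_(m < k) h (s m) (x m).
pose F s := fun x y => conjc (H s x) * H s y.
pose Finc := fun x y : {ffun 'I_k -> I} => (x == y)%:R - \sum_s F s x y.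
have prodsum : forall s (phi : 'I_k -> vec R I),
    \sum_y H s y * (\prod_(m < k) phi m (y m)) = \prod_(m < k) \sum_a h (s m) a * phi m a.
  move=> s phi; rewrite (bigA_distr_bigA (fun m a => h (s m) a * phi m a)).
  by apply: eq_bigr => y _; rewrite big_split.
exists F, Finc; split.
- split; [|split].
  + by move=> s v; rewrite rank1; exact: nsq_ge0.
  + move=> v.
    rewrite (@bk_ext _ v v _ (fun x y => (x == y)%:R + - (\sum_s F s x y))) //.
    rewrite bk_opD bk_opN bk_opS bk_id subr_ge0.
    under eq_bigr do rewrite rank1.
    apply: FB => w; apply: le_trans _ (@povm_le _ _ E Einc w hpovm).
    by apply: ler_sum => j _; exact: KP.
  + by move=> x y; rewrite /Finc addrC subrK.
- move=> s t hst; rewrite rank1 /tensor_state (prodsum s (fun m => psi (t m))).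
  have [m hm] : exists m, s m != t m.
    case: (pickP (fun m => s m != t m)) => [m hm|hn]; first by exists m.
    have st : s = t by apply/ffunP => m; apply/eqP; move/negbFE: (hn m).
    by rewrite st eqxx in hst.
  by rewrite (bigD1 m) //= UN ?mul0r ?nsq0 // eq_sym.
- rewrite /success -ReX; last first.
    apply: sumr_ge0 => j _; apply: mulr_ge0; last exact: hE.
    by rewrite lecE /=; apply/andP; split; [exact/eqP | rewrite invr_ge0 ler0n].
  congr complex.Re.
  under eq_bigr => s _ do rewrite rank1 /tensor_state (prodsum s (fun m => psi (s m))) nsqP.
  have e : forall s : {ffun 'I_k -> 'I_N}, (N%:R ^- k)%:C *
      \prod_(m < k) nsq (\sum_x h (s m) x * psi (s m) x)
      = \prod_(m < k) ((N%:R^-1)%:C * a (s m)).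
    move=> s; rewrite [RHS]big_split /= prod_const_ord; congr (_ * _).
      by rewrite -exprVn rmorphXn.
    by apply: eq_bigr => m _; rewrite SU.
  rewrite (eq_bigr _ (fun s _ => e s)).
  by rewrite -(bigA_distr_bigA (fun (m : 'I_k) j => (N%:R^-1)%:C * a j)) prod_const_ord.
Qed.

Lemma Re_le (z w : C) : z <= w -> complex.Re z <= complex.Re w.
Proof. by rewrite lecE => /andP[]. Qed.

Lemma rc_ge0 (x : R) : 0 <= x -> 0 <= x%:C :> C.
Proof. by move=> hx; rewrite lecE /=; apply/andP; split; [exact/eqP|]. Qed.

Lemma succ_bounds J I (chi : J -> vec R I) (eta : J -> R) E Einc :
  (forall j, 0 <= eta j) -> povm E Einc ->
  (0 <= success chi eta E) /\ (success chi eta E <= complex.Re (\sum_j (eta j)%:C * \sum_x nsq (chi j x))).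
Proof.
move=> heta hp; have [hE _] := hp; split.
  rewrite -[0]/(complex.Re 0); apply: Re_le.
  by apply: sumr_ge0 => j _; apply: mulr_ge0; [exact: rc_ge0 | exact: hE].
apply: Re_le; apply: ler_sum => j _; apply: ler_wpM2l; first exact: rc_ge0.
apply: le_trans (@povm_le _ _ E Einc (chi j) hp).
rewrite (bigD1 j) //= lerDl; apply: sumr_ge0 => i _; exact: hE.
Qed.

Definition USet J I (chi : J -> vec R I) (eta : J -> R) : set R :=
  [set s : R | exists (E : J -> op R I) (Einc : op R I),
        [/\ povm E Einc, unambiguous chi E & s = success chi eta E]].

Lemma bk_zero I (v : vec R I) : braket v (fun _ _ => 0) v = 0.
Proof. by rewrite /braket big1 // => x _; rewrite big1 // => y _; rewrite mulr0 mul0r. Qed.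

Lemma USet_sup J I (chi : J -> vec R I) (eta : J -> R) :
  (forall j, 0 <= eta j) -> has_sup (@USet _ _ chi eta).
Proof.
move=> heta; split.
  exists (success chi eta (fun _ _ _ => 0)), (fun _ _ _ => 0), (fun x y => (x == y)%:R).
  split => //.
  - split; first by move=> j v; rewrite bk_zero.
    split; first by move=> v; rewrite bk_id; apply: sumr_ge0 => x _; exact: nsq_ge0.
    by move=> x y; rewrite big1 ?add0r.
  - by move=> i j _; rewrite bk_zero.
exists (complex.Re (\sum_j (eta j)%:C * \sum_x nsq (chi j x))).
by move=> s [E [Einc [hp _ ->]]]; case: (@succ_bounds _ _ chi _ _ _ heta hp).
Qed.

Lemma USet_ge0 J I (chi : J -> vec R I) (eta : J -> R) s :
  (forall j, 0 <= eta j) -> @USet _ _ chi eta s -> 0 <= s.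
Proof. by move=> heta [E [Einc [hp _ ->]]]; case: (@succ_bounds _ _ chi _ _ _ heta hp). Qed.

Lemma sum_const_ord (c : R) k : \sum_(i < k) c = k%:R * c.
Proof.
rewrite big_const_ord; elim: k => [|n IH] /=; first by rewrite mul0r.
by rewrite IH -[n.+1]addn1 natrD; ring.
Qed.

Lemma powdiff (s p : R) k : 0 <= s -> s <= p ->
  p ^+ k - s ^+ k <= k%:R * p ^+ k.-1 * (p - s).
Proof.
move=> s0 sp; have p0 : 0 <= p := le_trans s0 sp.
rewrite subrXX mulrC; apply: ler_wpM2r; first by rewrite subr_ge0.
have -> : k%:R * p ^+ k.-1 = \sum_(i < k) p ^+ k.-1.
  by rewrite sum_const_ord.
apply: ler_sum => i _.
have hi : (k.-1 - i + i = k.-1)%N by rewrite subnK // -ltnS prednK ?ltn_ord // (leq_ltn_trans _ (ltn_ord i)).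
rewrite -[X in _ <= p ^+ X]hi exprD; apply: ler_wpM2l; first exact: exprn_ge0.
by apply: lerXn2r; rewrite ?nnegrE.
Qed.

Lemma sup_pow (S T : set R) k : has_sup S -> has_sup T ->
  (forall s, S s -> 0 <= s) -> (forall s, S s -> T (s ^+ k)) ->
  sup S ^+ k <= sup T.
Proof.
move=> hS hT h0 hST.
have [s0 Ss0] := hS.1.
have hp0 : 0 <= sup S := le_trans (h0 _ Ss0) (sup_upper_bound hS Ss0).
apply/ler_addgt0Pr => e he.
pose K := k%:R * sup S ^+ k.-1.
have hK : 0 <= K by apply: mulr_ge0; [exact: ler0n | exact: exprn_ge0].
pose d := e / (K + 1).
have hK1 : 0 < K + 1 by apply: ltr_wpDl.
have hd : 0 < d by apply: divr_gt0.
have [s Ss hs] := sup_adherent hd hS.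
have sp : s <= sup S := sup_upper_bound hS Ss.
have h1 := @powdiff _ _ k (h0 _ Ss) sp.
have h2 : s ^+ k <= sup T := sup_upper_bound hT (hST _ Ss).
have h3 : K * (sup S - s) <= K * d by apply: ler_wpM2l => //; lra.
have h4 : d * (K + 1) = e by rewrite /d divfK // gt_eqF.
have h5 : K * d + d = e by rewrite -h4; ring.
rewrite -/K in h1; lra.
Qed.
End S.

Local Close Scope complex_scope.

Theorem lemma1 (R : realType) (I : finType) (N k : nat)
  (hN : (2 <= N)%N) (hk : (1 <= k)%N)
  (psi : 'I_N -> vec R I)
  (hnorm : forall n, normalized (psi n))
  (hind : lin_indep psi) :
  opt_ud (fun n : 'I_N => psi n) (fun _ => (N%:R)^-1) ^+ k
    <= opt_ud (tensor_state psi) (fun _ : {ffun 'I_k -> 'I_N} => (N%:R ^+ k)^-1).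
Proof.
have eta1 : forall j : 'I_N, 0 <= (N%:R)^-1 :> R by move=> _; rewrite invr_ge0 ler0n.
have etak : forall j : {ffun 'I_k -> 'I_N}, 0 <= (N%:R ^+ k)^-1 :> R.
  by move=> _; rewrite invr_ge0 exprn_ge0 // ler0n.
rewrite /opt_ud; apply: (@sup_pow R _ _ k).
- exact: (@USet_sup R _ _ (fun n => psi n) _ eta1).
- exact: (@USet_sup R _ _ (tensor_state psi) _ etak).
- by move=> s; apply: (@USet_ge0 R _ _ (fun n => psi n) _ s eta1).
- move=> s [E [Einc [hp hu ->]]].
  have [F [Finc [hF hFu hs]]] := @construct R I N k psi E Einc hp hu.
  by exists F, Finc; split.
Qed.
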